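(* Fix a monomial order on $S$. Let $J,E,E'$ be ideals of $S$ such that $(J,E)$ and $(J,E')$ are G-nice pairs. The following are equivalent: (a) $(J+E)\cap(J+E')=J+(E\cap E')$ and $(J,E\cap E')$ is a G-nice pair; (b) $\mathrm{in}((J+E)\cap(J+E'))=\mathrm{in}(J)+\mathrm{in}(E\cap E')$.
   Context: $K$ is a field and $S=K[x_1,\ldots,x_n]$ with a fixed monomial order. For $0\neq f\in S$, $\mathrm{in}(f)$ denotes its leading monomial; for an ideal $I$, $\mathrm{in}(I)$ is the ideal generated by the leading monomials of the nonzero elements of $I$. A pair $(J,E)$ of ideals of $S$ is called Gröbner nice (G-nice) if $\mathrm{in}(J+E)=\mathrm{in}(J)+\mathrm{in}(E)$ (equivalently, the union of a Gröbner basis of $J$ and a Gröbner basis of $E$ is a Gröbner basis of $J+E$; equivalently, $\mathrm{in}(J\cap E)=\mathrm{in}(J)\cap\mathrm{in}(E)$). *)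

(* Defs.v *)
From HB Require Import structures.
From mathcomp Require Import all_boot all_order all_algebra.
From mathcomp Require Import mpoly.
Set Implicit Arguments. Unset Strict Implicit. Unset Printing Implicit Defensive.
Import GRing.Theory.
Local Open Scope ring_scope.

Section Defs.
Variables (n : nat) (K : fieldType).
Local Notation S := {mpoly K[n]}.
Local Notation Mon := 'X_{1..n}.

(* A monomial order: a total order on monomials, compatible with
   multiplication of monomials (addition of exponent vectors), and with
   the constant monomial 1 as least element (equivalently, a well-order). *)
Definition monomial_order (le : rel Mon) : Prop :=
  [/\ reflexive le, antisymmetric le, transitive le, total le
    & (forall m1 m2 m : Mon, le m1 m2 -> le (mnm_add m1 m) (mnm_add m2 m))]
  /\ (forall m : Mon, le (@mnm0 n) m).

Definition is_lead_mon (le : rel Mon) (f : S) (m : Mon) : Prop :=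
  m \in msupp f /\ forall m' : Mon, m' \in msupp f -> le m' m.

Definition is_ideal (I : S -> Prop) : Prop :=
  [/\ I 0,
      (forall f g, I f -> I g -> I (f + g))
    & (forall r f, I f -> I (r * f))].

Definition ideal_gen (G : S -> Prop) : S -> Prop :=
  fun p => exists s : seq (S * S),
    (forall x, x \in s -> G x.2) /\ p = \sum_(x <- s) x.1 * x.2.

Definition ideal_sum (I J : S -> Prop) : S -> Prop :=
  fun p => exists f g, I f /\ J g /\ p = f + g.

Definition ideal_cap (I J : S -> Prop) : S -> Prop :=
  fun p => I p /\ J p.

Definition ideal_eq (I J : S -> Prop) : Prop := forall p, I p <-> J p.

Definition init_ideal (le : rel Mon) (I : S -> Prop) : S -> Prop :=
  ideal_gen (fun p => exists f m, I f /\ f != 0 /\ is_lead_mon le f m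
                                  /\ p = 'X_[m]).

Definition G_nice (le : rel Mon) (J E : S -> Prop) : Prop :=
  ideal_eq (init_ideal le (ideal_sum J E))
           (ideal_sum (init_ideal le J) (init_ideal le E)).

End Defs.

(* Main.v *)
From HB Require Import structures.
From mathcomp Require Import all_boot all_order all_algebra.
From mathcomp Require Import mpoly.
Require Import Defs.
From Stdlib Require Import Classical ClassicalEpsilon.
Set Implicit Arguments. Unset Strict Implicit. Unset Printing Implicit Defensive.

Lemma min_after (g : nat -> nat) a :
  exists j, a < j /\ forall j', a < j' -> g j <= g j'.
Proof.
suff H : forall v, (exists j, a < j /\ g j <= v) ->
  exists j, a < j /\ forall j', a < j' -> g j <= g j'.
  by apply: (H (g a.+1)); exists a.+1.
elim=> [|v IH] [j [aj gj]].
  by exists j; split=> // j' _; move: gj; rewrite leqn0 => /eqP ->.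
case: (classic (exists j, a < j /\ g j <= v)) => [|hn]; first exact: IH.
exists j; split=> // j' aj'; apply: (@leq_trans v.+1) => //.
rewrite ltnNge; apply/negP=> hv; apply: hn; by exists j'.
Qed.

Lemma mono_sub (g : nat -> nat) : exists phi : nat -> nat,
  (forall i, phi i < phi i.+1) /\ (forall i, g (phi i) <= g (phi i.+1)).
Proof.
have H a : {j | a < j /\ forall j', a < j' -> g j <= g j'}.
  by apply: constructive_indefinite_description; apply: min_after.
pose nx a := proj1_sig (H a).
pose psi i := iter i nx 0.
have nxP a : a < nx a /\ forall j', a < j' -> g (nx a) <= g j'.
  exact: proj2_sig (H a).
exists (fun i => psi i.+1); split=> i /=.
  by case: (nxP (nx (psi i))).
case: (nxP (psi i)) => h1 h2; apply: h2.
by case: (nxP (nx (psi i))) => h3 _; apply: ltn_trans h3.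
Qed.

Lemma dickson_seq n (s : seq 'I_n) (f : nat -> 'X_{1..n}) : exists phi : nat -> nat,
  (forall i, phi i < phi i.+1) /\ forall i c, c \in s -> f (phi i) c <= f (phi i.+1) c.
Proof.
elim: s => [|c s [phi [Hphi Hs]]]; first by exists id; split.
have [psi [Hpsi Hg]] := mono_sub (fun i => f (phi i) c).
exists (fun i => phi (psi i)); split.
  move=> i; apply: (homo_ltn (f:=phi) (r:=fun a b => a < b) _ Hphi (Hpsi i)).
  move=> y x z; exact: ltn_trans.
move=> i c'; rewrite inE => /orP [/eqP -> //|cs].
apply: (homo_leq (f := fun k => f (phi k) c') (r:=fun a b => a <= b)) => //.
- by move=> y x z; apply: leq_trans.
- by move=> k; apply: Hs.
- exact: ltnW.
Qed.

Lemma dickson n (f : nat -> 'X_{1..n}) : exists i j, i < j /\ (f i <= f j)%MM.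
Proof.
have [phi [H1 H2]] := dickson_seq (enum 'I_n) f.
exists (phi 0), (phi 1); split=> //; apply/mnm_lepP=> c; apply: H2.
by rewrite mem_enum.
Qed.
Import GRing.Theory.
Local Open Scope ring_scope.

Section WFle.
Variables (n : nat) (le : rel 'X_{1..n}).
Hypothesis Hmo : monomial_order le.

Lemma le_wf_ind (P : 'X_{1..n} -> Prop) :
  (forall m, (forall m', le m' m -> m' != m -> P m') -> P m) -> forall m, P m.
Proof.
case: Hmo => [[Hr Ha Ht Htot Hc] H0] IH m.
apply: NNPP => Pm.
have step : forall x : {m | ~ P m}, {y : {m | ~ P m} | le (sval y) (sval x) /\ sval y != sval x}.
  move=> [x Qx] /=; apply: constructive_indefinite_description.
  apply: NNPP => hn; apply: Qx; apply: IH => m' h1 h2; apply: NNPP => hm'.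
  by apply: hn; exists (exist _ m' hm').
pose st x := sval (step x).
pose f k := sval (iter k st (exist _ m Pm)).
have Hs k : le (f k.+1) (f k) /\ f k.+1 != f k.
  by rewrite /f /= /st; case: (step _) => y [h1 h2].
have Hle : forall i j, (i <= j)%N -> le (f j) (f i).
  move=> i j ij; apply: (homo_leq (f := f) (r := fun a b => le b a)) => //.
  - by move=> y x z h1 h2; apply: Ht h1.
  - by move=> k; case: (Hs k).
have Hlt : forall i j, (i < j)%N -> f j != f i.
  move=> i j ij; apply/eqP => e.
  case: (Hs i) => h1 /eqP h2; apply: h2; apply: Ha; rewrite h1 /=.
  by rewrite -e; apply: Hle.
have [i [j [ij dv]]] := dickson f.
move/eqP: (Hlt i j ij); apply; apply: Ha; apply/andP; split; first exact: Hle (ltnW ij).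
have := Hc 0%MM (f j - f i)%MM (f i) (H0 _).
by rewrite /= -/(mnm_add _ _) add0m submK.
Qed.

End WFle.

Section Alg.
Variables (n : nat) (K : fieldType) (le : rel 'X_{1..n}).
Hypothesis Hmo : monomial_order le.
Local Notation S := {mpoly K[n]}.

Lemma seq_max (s : seq 'X_{1..n}) : s != [::] ->
  exists x, x \in s /\ forall y, y \in s -> le y x.
Proof.
case: Hmo => [[Hr Ha Ht Htot Hc] H0].
elim: s => [//|x s IH] _.
case: (eqVneq s [::]) => [->|sn].
  by exists x; split; rewrite ?inE // => y; rewrite inE => /eqP ->.
have [x' [x's Hx']] := IH sn.
case/orP: (Htot x x') => hx.
  exists x'; split; first by rewrite inE x's orbT.
  by move=> y; rewrite inE => /orP [/eqP ->|/Hx'].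
exists x; split; first by rewrite inE eqxx.
by move=> y; rewrite inE => /orP [/eqP ->|/Hx' h]; [apply: Hr|apply: Ht hx].
Qed.

Lemma lead_exists (f : S) : f != 0 -> exists m, is_lead_mon le f m.
Proof.
move=> fn; have : msupp f != [::] by rewrite msupp_eq0.
by case/seq_max => x [h1 h2]; exists x.
Qed.

Lemma supp_sum (s : seq (S * S)) m :
  m \in msupp (\sum_(x <- s) x.1 * x.2) -> exists x, x \in s /\ m \in msupp (x.1 * x.2).
Proof.
elim: s => [|y s IH]; first by rewrite big_nil msupp0.
rewrite big_cons => /msuppD_le; rewrite mem_cat => /orP [h|/IH [x [h1 h2]]].
  by exists y; rewrite inE eqxx.
by exists x; rewrite inE h1 orbT.
Qed.

Lemma mon_in_init (I : S -> Prop) m : init_ideal le I 'X_[m] ->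
  exists g u, I g /\ g != 0 /\ is_lead_mon le g u /\ (u <= m)%MM.
Proof.
move=> [s [Hs Hsum]].
have : m \in msupp (\sum_(x <- s) x.1 * x.2) by rewrite -Hsum msuppX inE.
case/supp_sum => x [xs hm].
have [g [u [Ig [gn [lg ex]]]]] := Hs x xs.
exists g, u; split=> //; split=> //; split=> //.
move: hm; rewrite ex (perm_mem (msuppMX _ _)) => /mapP [m' _ ->].
exact: lem_addr.
Qed.

End Alg.

Section Key.
Variables (n : nat) (K : fieldType) (le : rel 'X_{1..n}).
Hypothesis Hmo : monomial_order le.
Local Notation S := {mpoly K[n]}.

Lemma key (I L : S -> Prop) : is_ideal I -> is_ideal L ->
  (forall p, I p -> L p) -> (forall p, init_ideal le L p -> init_ideal le I p) ->
  forall p, L p -> I p.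
Proof.
move=> [I0 ID IM] [L0 LD LM] IL HLI.
have [[Hr Ha Ht Htot Hc] H0] := Hmo.
have LN : forall p, L p -> L (-p) by move=> p Lp; rewrite -mulN1r; apply: LM.
suff H : forall m f, L f -> f != 0 -> is_lead_mon le f m -> I f.
  move=> p Lp; case: (eqVneq p 0) => [->//|pn].
  have [m lm] := lead_exists Hmo pn; exact: H lm.
elim/(le_wf_ind Hmo) => m IH f Lf fn [mf lf].
have : init_ideal le L 'X_[m].
  exists [:: (1, 'X_[m])]; split.
    by move=> x; rewrite inE => /eqP -> /=; exists f, m; do !split=> //.
  by rewrite big_seq1 mul1r.
move/HLI/mon_in_init => [g [u [Ig [gn [[ug lg] um]]]]].
pose d := (m - u)%MM.
have dm : (d + u)%MM = m by rewrite /d submK.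
pose c := f@_m / g@_u.
pose r := c%:MP * 'X_[d].
have rgE : r * g = c *: (g * 'X_[d]) by rewrite /r -mulrA mul_mpolyC mulrC.
pose h := f - r * g.
have Lh : L h by apply: LD => //; apply: LN; apply: LM; apply: IL.
have fE : f = h + r * g by rewrite /h subrK.
case: (eqVneq h 0) => [h0|hn].
  by rewrite fE h0 add0r; apply: IM.
rewrite fE; apply: ID; last by apply: IM.
have [m' [m'h lh]] := lead_exists Hmo hn.
apply: (IH m') => //.
- move: m'h => /msuppB_le; rewrite mem_cat => /orP [/lf //|].
  rewrite rgE => /msuppZ_le; rewrite (perm_mem (msuppMX _ _)) => /mapP [m'' /lg h1 ->].
  by have := Hc _ _ d h1; rewrite -/(mnm_add _ _) -/(mnm_add _ _) [(u + d)%MM]addmC dm addmC.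
- apply/eqP => e; move: m'h; rewrite e mcoeff_msupp /h mcoeffB rgE mcoeffZ -{2}dm mcoeffMX.
  rewrite /c divfK ?subrr ?eqxx //.
  by rewrite -mcoeff_msupp.
Qed.

End Key.

Section Main.
Variables (n : nat) (K : fieldType) (le : rel 'X_{1..n}).
Local Notation S := {mpoly K[n]}.

Lemma init_mono (A B : S -> Prop) : (forall p, A p -> B p) ->
  forall p, init_ideal le A p -> init_ideal le B p.
Proof.
move=> AB p [s [Hs ->]]; exists s; split=> // x xs.
have [f [m [Af H]]] := Hs x xs; exists f, m; split=> //; exact: AB.
Qed.

Lemma init_add (A : S -> Prop) p q :
  init_ideal le A p -> init_ideal le A q -> init_ideal le A (p + q).
Proof.
move=> [s [Hs ->]] [t [Ht ->]]; exists (s ++ t); split; last by rewrite big_cat.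
by move=> x; rewrite mem_cat => /orP [/Hs|/Ht].
Qed.

Lemma sum_ideal (A B : S -> Prop) : is_ideal A -> is_ideal B -> is_ideal (ideal_sum A B).
Proof.
move=> [A0 AD AM] [B0 BD BM]; split.
- by exists 0, 0; rewrite addr0.
- move=> _ _ [f1 [g1 [h1 [h2 ->]]]] [f2 [g2 [h3 [h4 ->]]]].
  by exists (f1 + f2), (g1 + g2); rewrite addrACA; split; [apply: AD|split; [apply: BD|]].
- move=> r _ [f [g [h1 [h2 ->]]]]; exists (r * f), (r * g); rewrite mulrDr.
  by split; [apply: AM|split; [apply: BM|]].
Qed.

Lemma cap_ideal (A B : S -> Prop) : is_ideal A -> is_ideal B -> is_ideal (ideal_cap A B).
Proof.
move=> [A0 AD AM] [B0 BD BM]; split.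
- by split.
- by move=> f g [h1 h2] [h3 h4]; split; [apply: AD|apply: BD].
- by move=> r f [h1 h2]; split; [apply: AM|apply: BM].
Qed.

End Main.

Unset Implicit Arguments.
Theorem mainTheorem4 (n : nat) (K : fieldType) (le : rel 'X_{1..n})
  (J E E' : {mpoly K[n]} -> Prop) :
  monomial_order le ->
  is_ideal J -> is_ideal E -> is_ideal E' ->
  G_nice le J E -> G_nice le J E' ->
  ((ideal_eq (ideal_cap (ideal_sum J E) (ideal_sum J E'))
             (ideal_sum J (ideal_cap E E'))
    /\ G_nice le J (ideal_cap E E'))
   <->
   ideal_eq (init_ideal le (ideal_cap (ideal_sum J E) (ideal_sum J E')))
            (ideal_sum (init_ideal le J) (init_ideal le (ideal_cap E E')))).
Proof.
move=> Hmo HJ HE HE' _ _.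
have HJ' := HJ; have HE1 := HE; have HE1' := HE'.
case: HJ' => [J0 JD JM]; case: HE1 => [E0 ED EM]; case: HE1' => [E'0 E'D E'M].
set L := ideal_cap _ _; set I := ideal_sum J _.
have IinL : forall p, I p -> L p.
  move=> _ [f [g [Jf [[Eg E'g] ->]]]]; split; by exists f, g.
have sumsub : forall p, ideal_sum (init_ideal le J) (init_ideal le (ideal_cap E E')) p ->
    init_ideal le I p.
  move=> _ [a [b [ha [hb ->]]]]; apply: init_add.
    by apply: (init_mono _ ha) => f Jf; exists f, 0; rewrite addr0.
  by apply: (init_mono _ hb) => g Eg; exists 0, g; rewrite add0r.
split.
- move=> [eqLI gn] p; split=> h.
    by apply/gn; apply: (init_mono _ h) => q /eqLI.
  by apply: (init_mono IinL); apply/gn.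
- move=> hb.
  have Lsub : forall p, init_ideal le L p -> init_ideal le I p by move=> p /hb /sumsub.
  have LI := key Hmo (sum_ideal HJ (cap_ideal HE HE')) (cap_ideal (sum_ideal HJ HE) (sum_ideal HJ HE')) IinL Lsub.
  split.
  + by move=> p; split; [apply: LI|apply: IinL].
  + move=> p; split=> h; last exact: sumsub.
    by apply/hb; apply: (init_mono IinL).
Qed.
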